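(* For any strict pin words $u$ and $w$, $u\preceq w$ if and only if $\phi(u)$ is a factor of $\phi(w)$.
   Context: Pins are points of $\mathbb{Z}^2$. A pin $p$ separates a set $P$ from a set $Q$ horizontally (resp. vertically) if the horizontal (resp. vertical) line through $p$ has $P$ strictly on one side and $Q$ strictly on the other. A pin sequence is a sequence $(p_1,\dots,p_k)$ of pins, no two in a common row or column, such that for every $i\ge2$, $p_i$ lies outside the bounding box of $\{p_1,\dots,p_{i-1}\}$ and either $p_i$ separates $p_{i-1}$ from $\{p_1,\dots,p_{i-2}\}$ or $p_i$ is independent from $\{p_1,\dots,p_{i-1}\}$. Pin words: given a pin sequence $(p_1,\dots,p_n)$ and an origin $p_0$ such that $(p_0,\dots,p_n)$ is a pin sequence, each $p_i$ ($i\ge1$) is encoded by $U$ (resp. $D,L,R$) if $p_i$ separates $p_{i-1}$ from $\{p_0,\dots,p_{i-2}\}$ and lies above (resp. below, left of, right of) the bounding box of $\{p_0,\dots,p_{i-1}\}$, and by $1$ (resp. $2,3,4$) if $p_i$ is independent from $\{p_0,\dots,p_{i-1}\}$ and lies in the up-right (resp. up-left, bottom-left, bottom-right) corner region of that bounding box; the point $p_i$ is said to correspond to the $i$-th letter. Letters $1,2,3,4$ are numerals, $U,D,L,R$ directions. A strict pin word is a pin word of length $\ge2$ whose first letter is a numeral and all others directions. A point $x$ lies in quadrant $1$ (resp. $2,3,4$) with respect to a set $S$ if it is above and to the right of (resp. above-left, below-left, below-right of) all points of $S$. Order $\preceq$ on pin words: write $u=u^{(1)}\cdots u^{(j)}$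 as a product of strong numeral-led factors (each a numeral followed by any number of directions). Then $u\preceq w$ if $w$ can be written $w=v^{(1)}w^{(1)}\cdots v^{(j)}w^{(j)}v^{(j+1)}$ such that for each $i$: if $w^{(i)}$ begins with a numeral then $w^{(i)}=u^{(i)}$; if $w^{(i)}$ begins with a direction, then $v^{(i)}$ is nonempty, the point $p_k$ corresponding to the first letter of $w^{(i)}$ (in the pin sequence of $w$) lies in the quadrant given by the first letter of $u^{(i)}$ with respect to $\{p_0,\dots,p_{k-2}\}$, and all other letters of $u^{(i)}$ and $w^{(i)}$ agree. For a strict pin word $u=u'u''$ with $|u'|=2$, $\phi(u)=\varphi(u')u''$ with $\varphi$: $1R\mapsto RUR$, $2R\mapsto LUR$, $3R\mapsto LDR$, $4R\mapsto RDR$, $1L\mapsto RUL$, $2L\mapsto LUL$, $3L\mapsto LDL$, $4L\mapsto RDL$, $1U\mapsto URU$, $2U\mapsto ULU$, $3U\mapsto DLU$, $4U\mapsto DRU$, $1D\mapsto URD$, $2D\mapsto ULD$, $3D\mapsto DLD$, $4D\mapsto DRD$. A factor is a contiguous subword. *)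

(* Defs.v *)
From Stdlib Require Import ZArith List Lia.
Import ListNotations.
Open Scope Z_scope.

Definition point := (Z * Z)%type.
Definition px (p : point) : Z := fst p.
Definition py (p : point) : Z := snd p.
Definition pset := point -> Prop.

Definition single (a : point) : pset := fun q => q = a.
Definition subset (A B : pset) : Prop := forall q, A q -> B q.
Definition nonempty (A : pset) : Prop := exists q, A q.

Definition sep_h (p : point) (A B : pset) : Prop :=
  ((forall a, A a -> py a > py p) /\ (forall b, B b -> py b < py p)) \/
  ((forall a, A a -> py a < py p) /\ (forall b, B b -> py b > py p)).
Definition sep_v (p : point) (A B : pset) : Prop :=
  ((forall a, A a -> px a > px p) /\ (forall b, B b -> px b < px p)) \/
  ((forall a, A a -> px a < px p) /\ (forall b, B b -> px b > px p)).
Definition separates (p : point) (A B : pset) : Prop := sep_h p A B \/ sep_v p A B.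

Definition independent (p : point) (S : pset) : Prop :=
  ~ exists A B : pset, subset A S /\ subset B S /\ nonempty A /\ nonempty B /\
                       separates p A B.

Definition in_bbox (p : point) (S : pset) : Prop :=
  (exists a b, S a /\ S b /\ px a <= px p <= px b) /\
  (exists c d, S c /\ S d /\ py c <= py p <= py d).

Definition above (p : point) (S : pset) := forall a, S a -> py p > py a.
Definition below (p : point) (S : pset) := forall a, S a -> py p < py a.
Definition leftof (p : point) (S : pset) := forall a, S a -> px p < px a.
Definition rightof (p : point) (S : pset) := forall a, S a -> px p > px a.

Definition in_quadrant (q : nat) (p : point) (S : pset) : Prop :=
  match q with
  | 1%nat => above p S /\ rightof p S
  | 2%nat => above p S /\ leftof p S
  | 3%nat => below p S /\ leftof p S
  | 4%nat => below p S /\ rightof p S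
  | _ => False
  end.

(** Sequences of pins p_0, p_1, ... are functions nat -> point;
    lt_seg P m = {p_0, ..., p_(m-1)} (empty when m = 0). *)
Definition lt_seg (P : nat -> point) (m : nat) : pset :=
  fun q => exists i, (i < m)%nat /\ q = P i.

Definition pin_sequence (P : nat -> point) (n : nat) : Prop :=
  (forall i j, (i <= n)%nat -> (j <= n)%nat -> i <> j ->
      px (P i) <> px (P j) /\ py (P i) <> py (P j)) /\
  (forall i, (1 <= i <= n)%nat ->
      ~ in_bbox (P i) (lt_seg P i) /\
      (separates (P i) (single (P (i - 1)%nat)) (lt_seg P (i - 1)%nat)
       \/ independent (P i) (lt_seg P i))).

Inductive letter := L1 | L2 | L3 | L4 | LU | LD | LL | LR.

Definition is_numeral (l : letter) : Prop :=
  match l with L1 | L2 | L3 | L4 => True | _ => False end.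
Definition is_direction (l : letter) : Prop :=
  match l with LU | LD | LL | LR => True | _ => False end.
Definition numeral_quadrant (l : letter) : nat :=
  match l with L1 => 1 | L2 => 2 | L3 => 3 | L4 => 4 | _ => 0 end.

Definition encodes (P : nat -> point) (i : nat) (l : letter) : Prop :=
  let S := lt_seg P i in
  let sepd := (2 <= i)%nat /\
              separates (P i) (single (P (i - 1)%nat)) (lt_seg P (i - 1)%nat) in
  match l with
  | LU => sepd /\ above (P i) S
  | LD => sepd /\ below (P i) S
  | LL => sepd /\ leftof (P i) S
  | LR => sepd /\ rightof (P i) S
  | _ => independent (P i) S /\ in_quadrant (numeral_quadrant l) (P i) S
  end.

Definition realizes (P : nat -> point) (w : list letter) : Prop :=
  pin_sequence P (length w) /\
  forall i, (1 <= i <= length w)%nat -> encodes P i (nth (i - 1)%nat w L1).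

Definition pin_word (w : list letter) : Prop := exists P, realizes P w.

Definition strict_pin_word (u : list letter) : Prop :=
  pin_word u /\ (2 <= length u)%nat /\
  exists a rest, u = a :: rest /\ is_numeral a /\ Forall is_direction rest.

Definition strong_factor (f : list letter) : Prop :=
  exists a rest, f = a :: rest /\ is_numeral a /\ Forall is_direction rest.

(** Condition on one block: ui = u^(i), v = v^(i), wi = w^(i), and k the index
    (in the pin sequence P of w) of the point corresponding to the first letter
    of w^(i). *)
Definition block_ok (P : nat -> point) (ui v wi : list letter) (k : nat) : Prop :=
  match wi, ui with
  | b :: wrest, a :: urest =>
      (is_numeral b /\ wi = ui) \/
      (is_direction b /\ v <> [] /\
       in_quadrant (numeral_quadrant a) (P k) (lt_seg P (k - 1)%nat) /\
       urest = wrest)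
  | _, _ => False
  end.

(** embeds P us w off : w = v1 w1 ... vj wj v(j+1) matching the blocks us,
    where off letters of the full word precede w. *)
Fixpoint embeds (P : nat -> point) (us : list (list letter)) (w : list letter)
  (off : nat) : Prop :=
  match us with
  | [] => True
  | ui :: us' =>
      exists v wi rest, w = v ++ wi ++ rest /\
        block_ok P ui v wi (off + length v + 1)%nat /\
        embeds P us' rest (off + length v + length wi)%nat
  end.

Definition preceq_wrt (P : nat -> point) (u w : list letter) : Prop :=
  exists us, u = concat us /\ Forall strong_factor us /\ embeds P us w 0.

Definition preceq (u w : list letter) : Prop :=
  exists P, realizes P w /\ preceq_wrt P u w.

Definition varphi (a b : letter) : list letter :=
  match a, b with
  | L1, LR => [LR; LU; LR] | L2, LR => [LL; LU; LR]
  | L3, LR => [LL; LD; LR] | L4, LR => [LR; LD; LR]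
  | L1, LL => [LR; LU; LL] | L2, LL => [LL; LU; LL]
  | L3, LL => [LL; LD; LL] | L4, LL => [LR; LD; LL]
  | L1, LU => [LU; LR; LU] | L2, LU => [LU; LL; LU]
  | L3, LU => [LD; LL; LU] | L4, LU => [LD; LR; LU]
  | L1, LD => [LU; LR; LD] | L2, LD => [LU; LL; LD]
  | L3, LD => [LD; LL; LD] | L4, LD => [LD; LR; LD]
  | _, _ => [a; b] (* not used on strict pin words *)
  end.

Definition phi (u : list letter) : list letter :=
  match u with
  | a :: b :: rest => varphi a b ++ rest
  | _ => u
  end.

Definition factor (f g : list letter) : Prop := exists x y, g = x ++ f ++ y.

(* Main.v *)
Require Import Defs.
From Stdlib Require Import List ZArith Lia.
Import ListNotations.
Open Scope Z_scope.

Definition dside (d : letter) (p q : point) : Prop :=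
  match d with
  | LU => py p > py q | LD => py p < py q
  | LL => px p < px q | LR => px p > px q | _ => False end.
Definition sideS d p (S : pset) := forall a, S a -> dside d p a.
Definition perp (X Y : letter) : Prop :=
  match X, Y with
  | (LU|LD), (LL|LR) => True | (LL|LR), (LU|LD) => True | _, _ => False end.

Ltac saturate := repeat match goal with
  | H : forall y : point, ?S y -> _, M : ?S ?x |- _ =>
    let T := type of (H x M) in
    lazymatch goal with _ : T |- _ => fail | _ => pose proof (H x M) end
  end.

Ltac crush :=
  unfold sideS, dside, separates, sep_h, sep_v in *; cbn in *;
  repeat match goal with
  | H : _ /\ _ |- _ => destruct H
  | H : _ \/ _ |- _ => destruct H
  end; saturate; lia.

Lemma A1 X Y p q (S : pset) s0 : perp X Y -> sideS X p S -> S s0 -> dside Y q p ->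
  sideS Y q S -> separates q (single p) S -> sideS X q S.
Proof.
  intros Hp H1 Hs H2 H3 H4 a Ha. assert (single p p) by reflexivity.
  destruct X, Y; cbn in Hp; try contradiction; crush.
Qed.

Lemma A2 X Y p q (S : pset) s0 : perp X Y -> sideS X q S -> S s0 -> dside Y q p ->
  sideS Y q S -> separates q (single p) S -> sideS X p S.
Proof.
  intros Hp H1 Hs H2 H3 H4 a Ha. assert (single p p) by reflexivity.
  destruct X, Y; cbn in Hp; try contradiction; crush.
Qed.

Lemma A3 X Y p q (S : pset) s0 : perp X Y -> dside X p s0 -> S s0 -> dside Y q p ->
  sideS Y q S -> separates q (single p) S -> sideS X p S.
Proof.
  intros Hp H1 Hs H2 H3 H4 a Ha. assert (single p p) by reflexivity.
  destruct X, Y; cbn in Hp; try contradiction; crush.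
Qed.

Lemma A4 d Z p (T B : pset) r b0 : is_direction d -> is_direction Z ->
  sideS Z p T -> sideS d p T -> T r -> T b0 -> B b0 -> (forall x, B x -> T x) ->
  separates p (single r) B -> d = Z.
Proof.
  intros Hd HZ H1 H2 Hr Hb HB HBT Hs. assert (single r r) by reflexivity.
  destruct d, Z; cbn in Hd, HZ; try contradiction; try reflexivity; exfalso; crush.
Qed.

Definition isH (d : letter) : bool := match d with LL | LR => true | _ => false end.
Definition hq (a : letter) : letter := match a with L2 | L3 => LL | _ => LR end.
Definition vq (a : letter) : letter := match a with L3 | L4 => LD | _ => LU end.
Definition y0 a b := if isH b then hq a else vq a.
Definition y1 a b := if isH b then vq a else hq a.

Lemma varphi_eq a b : is_numeral a -> is_direction b -> varphi a b = [y0 a b; y1 a b; b].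
Proof. destruct a, b; cbn; intros; try contradiction; reflexivity. Qed.

Lemma perp_y1 a b : is_direction b -> perp (y1 a b) b.
Proof. destruct a, b; cbn; intros; auto. Qed.
Lemma perp_y01 a b : is_direction b -> perp (y0 a b) (y1 a b).
Proof. destruct a, b; cbn; intros; auto. Qed.
Lemma dir_y0 a b : is_direction (y0 a b).
Proof. destruct a, b; cbn; auto. Qed.
Lemma dir_y1 a b : is_direction (y1 a b).
Proof. destruct a, b; cbn; auto. Qed.

Lemma quad a b p S : is_numeral a -> is_direction b ->
  (in_quadrant (numeral_quadrant a) p S <-> sideS (y0 a b) p S /\ sideS (y1 a b) p S).
Proof.
  intros Ha Hb; destruct a, b; cbn in *; try contradiction;
  unfold above, below, leftof, rightof, sideS, dside; tauto.
Qed.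

Lemma A5 X Z d p s : perp X d -> perp Z d -> dside X p s -> dside Z p s -> X = Z.
Proof. intros H1 H2 H3 H4; destruct X, Z, d; cbn in *; try contradiction; auto; lia. Qed.

Lemma yinj a c d : is_numeral a -> is_numeral c -> y0 c d = y0 a d -> y1 c d = y1 a d -> c = a.
Proof. destruct a, c, d; cbn; intros; try contradiction; auto; discriminate. Qed.

Lemma enc_dir P i d : is_direction d -> encodes P i d ->
  (2 <= i)%nat /\ separates (P i) (single (P (i-1)%nat)) (lt_seg P (i-1)%nat) /\
  sideS d (P i) (lt_seg P i).
Proof. destruct d; cbn; intros; try contradiction; tauto. Qed.

Lemma enc_num P i c : is_numeral c -> encodes P i c ->
  in_quadrant (numeral_quadrant c) (P i) (lt_seg P i).
Proof. destruct c; cbn; intros; try contradiction; tauto. Qed.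

Lemma lt_seg_in P i m : (i < m)%nat -> lt_seg P m (P i).
Proof. intros; exists i; auto. Qed.
Lemma lt_seg_mono P i j a : (i <= j)%nat -> lt_seg P i a -> lt_seg P j a.
Proof. intros H [k [Hk ->]]; exists k; split; [lia|auto]. Qed.
Lemma sideS_mono d p P i j : (i <= j)%nat -> sideS d p (lt_seg P j) -> sideS d p (lt_seg P i).
Proof. intros H1 H2 a Ha; apply H2; eapply lt_seg_mono; eauto. Qed.

Lemma renc P w i : realizes P w -> (i < length w)%nat -> encodes P (S i) (nth i w L1).
Proof.
  intros [_ H] Hi. specialize (H (S i)). replace (S i - 1)%nat with i in H by lia.
  apply H; lia.
Qed.

Lemma phi_cons c d t : is_numeral c -> is_direction d ->
  phi (c :: d :: t) = y0 c d :: y1 c d :: d :: t.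
Proof. intros; cbn. rewrite varphi_eq; auto. Qed.

Ltac cl := solve [apply dir_y0 | apply dir_y1 | apply lt_seg_in; lia |
   intros ?; apply lt_seg_mono; lia].

Lemma fwd_core P c t v b b1 r rest a :
  realizes P (c :: t) -> is_numeral c -> Forall is_direction t ->
  c :: t = v ++ b :: b1 :: r ++ rest -> v <> [] -> is_direction b -> is_numeral a ->
  is_direction b1 ->
  in_quadrant (numeral_quadrant a) (P (S (length v))) (lt_seg P (length v)) ->
  factor (varphi a b1 ++ r) (phi (c :: t)).
Proof.
  intros HR Hc Ht Hw Hv Hb Ha Hb1 HQ.
  set (n := length v) in *.
  assert (Hn : (1 <= n)%nat) by (destruct v; [congruence|subst n; cbn; lia]).
  assert (Hlen : length (c :: t) = (n + 2 + length r + length rest)%nat)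
    by (rewrite Hw, length_app; cbn; rewrite length_app; subst n; lia).
  assert (E1 : encodes P (S n) b).
  { pose proof (renc P (c::t) n HR ltac:(lia)) as E. rewrite Hw in E.
    subst n; rewrite nth_middle in E; exact E. }
  assert (E2 : encodes P (S (S n)) b1).
  { pose proof (renc P (c::t) (S n) HR ltac:(lia)) as E. rewrite Hw in E.
    replace (S n) with (length (v ++ [b])) in E by (rewrite length_app; cbn; subst n; lia).
    replace (v ++ b :: b1 :: r ++ rest) with ((v ++ [b]) ++ b1 :: r ++ rest) in E
      by (rewrite <- app_assoc; reflexivity).
    rewrite nth_middle in E. replace (length (v ++ [b])) with (S n) in E
      by (rewrite length_app; cbn; subst n; lia). exact E. }
  apply (quad a b1) in HQ; auto. destruct HQ as [Q0 Q1].
  apply enc_dir in E1; auto. apply enc_dir in E2; auto.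
  destruct E1 as [_ [sep1 side1]]. destruct E2 as [_ [sep2 side2]].
  cbn [Nat.sub] in sep1, sep2. rewrite Nat.sub_0_r in sep1.
  assert (F1 : sideS (y1 a b1) (P (S n)) (lt_seg P (S n))).
  { apply (A3 _ b1 _ (P (S (S n))) _ (P 0%nat)); auto.
    - apply perp_y1; auto.
    - apply Q1, lt_seg_in; lia.
    - apply lt_seg_in; lia.
    - apply side2, lt_seg_in; lia.
    - eapply sideS_mono; [|exact side2]; lia. }
  assert (F2 : b = y1 a b1).
  { apply (A4 b (y1 a b1) (P (S n)) (lt_seg P (S n)) (lt_seg P n) (P n) (P 0%nat)); auto; try cl. }
  subst b.
  assert (F3 : sideS (y0 a b1) (P n) (lt_seg P n)).
  { apply (A2 _ (y1 a b1) _ (P (S n)) _ (P 0%nat)); auto; try cl; try (apply perp_y01; auto);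
    try (apply F1, lt_seg_in; lia); try (eapply sideS_mono; [|exact F1]; lia). }
  rewrite varphi_eq by auto.
  destruct v as [|c' v1]; [congruence|]. injection Hw as <- Ht'. subst t.
  destruct (Nat.eq_dec n 1) as [H1|H1].
  - destruct v1; [|subst n; cbn in H1; lia]. cbn in *.
    apply Forall_inv in Ht as Hd.
    rewrite varphi_eq by auto.
    assert (E0 := renc P _ 0 HR ltac:(cbn; lia)). cbn in E0.
    apply enc_num in E0; auto. apply (quad c (y1 a b1)) in E0; auto.
    destruct E0 as [_ G1].
    assert (Heq : y1 c (y1 a b1) = y0 a b1).
    { apply (A5 _ _ (y1 a b1) (P 1%nat) (P 0%nat)).
      - apply perp_y1; apply dir_y1.
      - apply perp_y01; auto.
      - apply G1, lt_seg_in; lia.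
      - apply F3, lt_seg_in; lia. }
    rewrite Heq. exists [y0 c (y1 a b1)], rest. reflexivity.
  - destruct (exists_last (l := v1)) as [v2 [e Hv2]].
    { intro; subst v1; subst n; cbn in H1; lia. }
    subst v1.
    assert (He : encodes P n e).
    { pose proof (renc P (c :: (v2 ++ [e]) ++ y1 a b1 :: b1 :: r ++ rest) (n - 1) HR ltac:(lia)) as E.
      replace (S (n - 1)) with n in E by lia.
      replace (c :: (v2 ++ [e]) ++ y1 a b1 :: b1 :: r ++ rest)
        with ((c :: v2) ++ e :: y1 a b1 :: b1 :: r ++ rest) in E
        by (cbn; rewrite <- app_assoc; reflexivity).
      replace (n - 1)%nat with (length (c :: v2)) in E
        by (subst n; cbn; rewrite length_app; cbn; lia).
      rewrite nth_middle in E; exact E. }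
    assert (Hed : is_direction e).
    { rewrite Forall_forall in Ht. apply Ht. apply in_or_app; left; apply in_or_app; right; left; auto. }
    assert (Hn2 : (2 <= n)%nat) by lia.
    apply enc_dir in He as He'; auto. destruct He' as [_ [sepe sidee]].
    assert (Hey : e = y0 a b1).
    { apply (A4 e (y0 a b1) (P n) (lt_seg P n) (lt_seg P (n-1)) (P (n-1)%nat) (P 0%nat)); auto; cl. }
    subst e.
    destruct v2 as [|d v3].
    + cbn. rewrite varphi_eq by (auto; apply dir_y0).
      exists [y0 c (y0 a b1); y1 c (y0 a b1)], rest. reflexivity.
    + assert (Hd : is_direction d) by (apply Forall_inv in Ht; auto).
      cbn. rewrite varphi_eq by auto.
      exists (y0 c d :: y1 c d :: d :: v3), rest. cbn.
      rewrite <- !app_assoc. reflexivity.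
Qed.

Lemma conv_core P c d t X Y a b1 r :
  realizes P (c :: d :: t) -> is_numeral c -> Forall is_direction (d :: t) ->
  is_numeral a -> is_direction b1 ->
  y0 c d :: y1 c d :: d :: t = X ++ (y0 a b1 :: y1 a b1 :: b1 :: r) ++ Y ->
  embeds P [a :: b1 :: r] (c :: d :: t) 0.
Proof.
  intros HR Hc Ht Ha Hb1 HE. cbn [embeds].
  assert (Hd : is_direction d) by (apply Forall_inv in Ht; auto).
  destruct X as [|x0 [|x1 X']]; cbn in HE.
  - injection HE as E0 E1 E2 E3. subst d.
    assert (c = a) by (eapply yinj; eauto). subst c.
    exists [], (a :: b1 :: r), Y. split; [cbn; rewrite E3; reflexivity|].
    split; [|exact I]. cbn. left; auto.
  - injection HE as E0 E1 E2 E3. subst t.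
    exists [c], (d :: b1 :: r), Y. split; [reflexivity|].
    split; [|exact I]. cbn. right. split; [auto|]. split; [congruence|].
    split; [|reflexivity].
    assert (E0' := renc P _ 0 HR ltac:(cbn; lia)). cbn in E0'.
    apply enc_num in E0'; auto. apply (quad c d) in E0'; auto. destruct E0' as [_ G1].
    assert (E1' := renc P _ 1 HR ltac:(cbn; lia)). cbn in E1'.
    apply enc_dir in E1'; auto. destruct E1' as [_ [sep side]]. cbn in sep.
    apply (quad a b1); auto. rewrite <- E1, <- E2.
    split.
    + apply (A1 _ d (P 1%nat) _ _ (P 0%nat)); auto.
      * apply perp_y1; auto.
      * apply lt_seg_in; lia.
      * apply side, lt_seg_in; lia.
      * eapply sideS_mono; [|exact side]; lia.
    + eapply sideS_mono; [|exact side]; lia.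
  - injection HE as E0 E1 HE.
    set (n := S (S (length X'))).
    assert (Hw : c :: d :: t = (c :: X' ++ [y0 a b1]) ++ (y1 a b1 :: b1 :: r) ++ Y)
      by (rewrite HE; cbn; rewrite <- !app_assoc; reflexivity).
    exists (c :: X' ++ [y0 a b1]), (y1 a b1 :: b1 :: r), Y. split; [exact Hw|].
    split; [|exact I]. cbn. right. split; [apply dir_y1|]. split; [congruence|].
    split; [|reflexivity].
    rewrite length_app. cbn.
    replace (length X' + 1 + 1)%nat with n by (subst n; lia).
    assert (Hlen : length (c :: d :: t) = (n + 2 + length r + length Y)%nat)
      by (rewrite Hw; cbn; rewrite !length_app; cbn; rewrite ?length_app; subst n; lia).
    assert (En : encodes P n (y0 a b1)).
    { pose proof (renc P _ (n - 1) HR ltac:(lia)) as E.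
      replace (S (n - 1)) with n in E by (subst n; lia).
      rewrite Hw in E.
      replace ((c :: X' ++ [y0 a b1]) ++ (y1 a b1 :: b1 :: r) ++ Y)
        with ((c :: X') ++ y0 a b1 :: (y1 a b1 :: b1 :: r) ++ Y) in E
        by (cbn; rewrite <- !app_assoc; reflexivity).
      replace (n - 1)%nat with (length (c :: X')) in E by (subst n; cbn; lia).
      rewrite nth_middle in E; exact E. }
    assert (En1 : encodes P (S n) (y1 a b1)).
    { pose proof (renc P _ n HR ltac:(lia)) as E.
      rewrite Hw in E.
      replace n with (length (c :: X' ++ [y0 a b1])) in E
        by (subst n; cbn; rewrite length_app; cbn; lia).
      change ((y1 a b1 :: b1 :: r) ++ Y) with (y1 a b1 :: (b1 :: r ++ Y)) in E. rewrite nth_middle in E.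
      replace (length (c :: X' ++ [y0 a b1])) with n in E
        by (subst n; cbn; rewrite length_app; cbn; lia). exact E. }
    apply enc_dir in En; [|apply dir_y0]. apply enc_dir in En1; [|apply dir_y1].
    destruct En as [_ [_ sn]]. destruct En1 as [_ [sep1 s1]].
    cbn [Nat.sub] in sep1. rewrite Nat.sub_0_r in sep1.
    apply (quad a b1); auto. split.
    + apply (A1 _ (y1 a b1) (P n) _ _ (P 0%nat)); auto; try cl.
      * apply perp_y01; auto.
      * apply s1, lt_seg_in; lia.
      * eapply sideS_mono; [|exact s1]; lia.
    + eapply sideS_mono; [|exact s1]; lia.
Qed.

Lemma us_single u a rest us : u = a :: rest -> is_numeral a -> Forall is_direction rest ->
  u = concat us -> Forall strong_factor us -> us = [u].
Proof.
  intros -> Ha Hr Hc Hf. destruct us as [|f us']; [discriminate|].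
  inversion Hf as [|? ? Hf1 Hf2]; subst.
  destruct Hf1 as [a' [r' [-> [Ha' Hr']]]].
  destruct us' as [|g us''].
  - cbn in *. rewrite app_nil_r in *. congruence.
  - inversion Hf2 as [|? ? Hg _]; subst.
    destruct Hg as [a'' [r'' [-> [Ha'' _]]]].
    cbn in Hc. injection Hc as _ Hc. subst rest.
    rewrite Forall_forall in Hr.
    assert (is_direction a'') by (apply Hr; apply in_or_app; right; left; auto).
    destruct a''; cbn in *; contradiction.
Qed.

Theorem lemma7 (u w : list letter) :
  strict_pin_word u -> strict_pin_word w ->
  (preceq u w <-> factor (phi u) (phi w)).
Proof.
  intros [_ [Hlu [a [ur [Hu [Ha Hur]]]]]] [[P0 HP0] [Hlw [c [t [Hw [Hc Ht]]]]]].
  destruct ur as [|b1 r]; [subst u; cbn in Hlu; lia|].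
  assert (Hb1 : is_direction b1) by (apply Forall_inv in Hur; auto).
  split.
  - intros [P [HP [us [Hus [Hf He]]]]].
    rewrite (us_single u a (b1 :: r) us Hu Ha Hur Hus Hf) in He.
    cbn [embeds] in He. destruct He as [v [wi [rest [Hwe [Hbk _]]]]].
    subst u. unfold block_ok in Hbk.
    destruct wi as [|b wrest]; [contradiction|].
    destruct Hbk as [[Hbn Heq] | [Hbd [Hv [HQ Heq]]]].
    + injection Heq as -> ->.
      destruct v as [|e v'].
      * cbn in Hwe. rewrite Hwe. exists [], rest. cbn. rewrite <- app_assoc. reflexivity.
      * exfalso. rewrite Hw in Hwe. injection Hwe as _ Hwe. subst t.
        rewrite Forall_forall in Ht.
        assert (is_direction a) by (apply Ht; apply in_or_app; right; left; auto).
        destruct a; cbn in *; contradiction.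
    + subst wrest. cbn [phi]. rewrite Hw.
      replace (0 + length v + 1 - 1)%nat with (length v) in HQ by lia.
      replace (0 + length v + 1)%nat with (S (length v)) in HQ by lia.
      apply (fwd_core P c t v b b1 r rest a); auto.
      * rewrite <- Hw; auto.
      * rewrite <- Hw; exact Hwe.
  - intros [X [Y HE]].
    exists P0. split; [auto|]. exists [u]. split; [cbn; rewrite app_nil_r; auto|].
    split.
    + constructor; [|constructor]. exists a, (b1 :: r). auto.
    + destruct t as [|d t']; [subst w; cbn in Hlw; lia|].
      assert (Hd : is_direction d) by (apply Forall_inv in Ht; auto).
      subst u w. rewrite phi_cons in HE by auto. cbn [phi] in HE.
      rewrite varphi_eq in HE by auto.
      eapply conv_core; eauto.
Qed.
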